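(* Let $\mathcal{A}$ be a normal cyclotomic $S$-ring with trivial radical over a finite cyclic group $G$, and let $K\le\mathrm{Aut}(G)$ be such that $\mathcal{A}=\mathrm{Cyc}(K,G)$. Then $\mathrm{Aut}(\mathcal{A})=G_{right}\rtimes K$.
   Context: An $S$-ring over $G$ is a subring $\mathcal{A}\subseteq\mathbb{Z}G$ spanned by the elements $\underline{X}=\sum_{x\in X}x$ for $X$ in a partition $\mathcal{S}(\mathcal{A})$ of $G$ (basic sets) with $\{e\}\in\mathcal{S}(\mathcal{A})$ and closed under $X\mapsto X^{-1}$. For $K\le\mathrm{Aut}(G)$, $\mathrm{Cyc}(K,G)$ is the $S$-ring whose basic sets are the $K$-orbits; $\mathcal{A}$ is cyclotomic if it equals $\mathrm{Cyc}(K,G)$ for some $K$. For $X\in\mathcal{S}(\mathcal{A})$ let $r(X)=\{(g,xg):g\in G,x\in X\}$; $\mathrm{Aut}(\mathcal{A})$ is the group of permutations $f$ of $G$ with $r(X)^f=r(X)$ for all basic sets $X$. $G_{right}$ is the group of right multiplications $g\mapsto gh$, $h\in G$. $\mathcal{A}$ is normal if $G_{right}$ is normal in $\mathrm{Aut}(\mathcal{A})$. For $X\subseteq G$, $\mathrm{rad}(X)=\{g\in G:gX=Xg=X\}$; the radical of $\mathcal{A}$ (over cyclic $G$) is $\mathrm{rad}(X)$ for a basic set $X$ containing a generator of $G$, and it is trivial if it equals $\{e\}$. *)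

(* Defs.v *)
From mathcomp Require Import all_boot all_fingroup all_solvable.
Set Implicit Arguments. Unset Strict Implicit. Unset Printing Implicit Defensive.
Local Open Scope group_scope.

(* The finite group G is the whole finGroupType gT, i.e. G = [set: gT]. *)
Section SRings.
Variable gT : finGroupType.

(* S-ring given by its family S of basic sets: a partition of G containing {e},
   closed under X |-> X^-1, whose span is a subring of ZG (the coefficient of z
   in X*Y, i.e. #{(x,y) in X x Y | x y = z}, is constant on each basic set). *)
Definition is_Sring (S : {set {set gT}}) : Prop :=
  [/\ partition S [set: gT],
      [set 1] \in S,
      (forall X, X \in S -> X^-1 \in S) &
      (forall X Y Z, X \in S -> Y \in S -> Z \in S ->
        forall z z', z \in Z -> z' \in Z ->
          #|[set p in setX X Y | p.1 * p.2 == z]| =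
          #|[set p in setX X Y | p.1 * p.2 == z']|)].

Definition Cyc (K : {set {perm gT}}) : {set {set gT}} :=
  [set orbit 'P K x | x : gT].

Definition rX (X : {set gT}) : {set gT * gT} :=
  [set (g, x * g) | g in [set: gT], x in X].

Definition AutS (S : {set {set gT}}) : {set {perm gT}} :=
  [set f : {perm gT} | [forall X in S,
     [set (f p.1, f p.2) | p in rX X] == rX X]].

Definition Gright : {set {perm gT}} := [set perm (mulIg h) | h : gT].

Definition normal_Sring (S : {set {set gT}}) : Prop := Gright <| AutS S.

Definition rad (X : {set gT}) : {set gT} :=
  [set g | (g *: X == X) && (X :* g == X)].

Definition trivial_radical (S : {set {set gT}}) : Prop :=
  exists2 X, X \in S &
    (exists2 x, x \in X & generator [set: gT] x) /\ rad X = 1.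

End SRings.

(* Main.v *)
Require Import Defs.
From mathcomp Require Import all_boot all_fingroup all_solvable.
Local Open Scope group_scope.
Set Implicit Arguments. Unset Strict Implicit.

Section Aux.
Variable gT : finGroupType.

Lemma rXP (X : {set gT}) a b : ((a, b) \in rX X) = (b * a^-1 \in X).
Proof.
apply/imset2P/idP.
  by case=> g x _ Hx [-> ->]; rewrite mulgK.
by move=> H; exists a (b * a^-1) => //; rewrite mulgKV.
Qed.

Lemma AutSP (S : {set {set gT}}) (f : {perm gT}) :
  reflect (forall X, X \in S -> forall a b, b * a^-1 \in X -> f b * (f a)^-1 \in X)
          (f \in AutS S).
Proof.
rewrite inE; apply: (iffP forallP).
  move=> H X XS a b Hab; move/implyP: (H X) => /(_ XS) /eqP E.
  have: (f a, f b) \in rX X.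
    by rewrite -E; apply/imsetP; exists (a, b); rewrite ?rXP.
  by rewrite rXP.
move=> H X; apply/implyP => XS; rewrite eqEcard; apply/andP; split.
  apply/subsetP => q /imsetP [[a b] ab ->]; rewrite rXP /=; apply: H => //.
  by rewrite -rXP.
rewrite card_imset //; move=> [a b] [c d] /= [] /perm_inj-> /perm_inj-> //.
Qed.

Definition rp (h : gT) : {perm gT} := perm (mulIg h).

Lemma rpE h x : rp h x = x * h. Proof. by rewrite permE. Qed.

Lemma rpM h1 h2 : rp (h1 * h2) = rp h1 * rp h2.
Proof. by apply/permP => x; rewrite permM !rpE mulgA. Qed.

Lemma rp1 : rp 1 = 1.
Proof. by apply/permP => x; rewrite rpE perm1 mulg1. Qed.

Lemma gsR : group_set (Gright gT).
Proof.
apply/group_setP; split.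
  by apply/imsetP; exists 1 => //; rewrite -rp1.
move=> _ _ /imsetP[h1 _ ->] /imsetP[h2 _ ->]; apply/imsetP; exists (h1 * h2) => //.
by symmetry; exact: rpM.
Qed.

Lemma autM (k : {perm gT}) : k \in Aut [set: gT] -> forall x y, k (x * y) = k x * k y.
Proof.
by move=> Hk x y; move/morphicP: (Aut_morphic Hk) => /(_ x y (in_setT x) (in_setT y)).
Qed.

Lemma aut1 (k : {perm gT}) : k \in Aut [set: gT] -> k 1 = 1.
Proof.
by move=> Hk; move/morphicP: (Aut_morphic Hk) => H; apply: (morph1 (Morphism H)).
Qed.

Lemma autV (k : {perm gT}) : k \in Aut [set: gT] -> forall x, k x^-1 = (k x)^-1.
Proof.
move=> Hk x; apply/eqP; rewrite eq_sym eq_invg_mul -autM // mulgV aut1 //.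
Qed.

End Aux.

Theorem lemma6p5 (gT : finGroupType) (S : {set {set gT}}) (K : {group {perm gT}}) :
  cyclic [set: gT] ->
  is_Sring S ->
  K \subset Aut [set: gT] ->
  S = Cyc K ->
  normal_Sring S ->
  trivial_radical S ->
  AutS S = Gright gT ><| K.
Proof.
move=> _ _ KA SE /andP[RA AN] [X0 X0S [[x _ genx] _]].
set R := Gright gT.
pose RG := Group (gsR gT).
have orbK : forall X, X \in S -> forall y k, y \in X -> k \in K -> k y \in X.
  move=> X; rewrite SE => /imsetP[z _ ->] y k Hy Hk.
  by rewrite -[k y]/(aperm y k) orbit_actr.
have KAut : K \subset AutS S.
  apply/subsetP => k Hk; apply/AutSP => X XS a b Hab.
  have Ak := subsetP KA k Hk.
  by rewrite -autV // -autM //; apply: orbK.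
have KN : K \subset 'N(R) := subset_trans KAut AN.
have ER : AutS S = R * K.
  apply/eqP; rewrite eqEsubset; apply/andP; split; last first.
    apply/subsetP => _ /mulsgP[r k /imsetP[h _ ->] Hk ->].
    have Ak := subsetP KA k Hk.
    apply/AutSP => X XS a b Hab.
    rewrite -[perm _]/(rp h) !permM !rpE -autV // -autM //.
    rewrite invMg mulgA mulgK; exact: orbK.
  apply/subsetP => f Hf.
  set h := f 1.
  set g := f * rp h^-1.
  have gA : g \in AutS S.
    apply/AutSP => X XS a b Hab.
    rewrite !permM !rpE invMg invgK mulgA mulgKV.
    exact: (AutSP _ _ Hf).
  have g1 : g 1 = 1 by rewrite permM rpE mulgV.
  have gN : g \in 'N(R) := subsetP AN _ gA.
  have gM : forall w h', g (w * h') = g w * g h'.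
    move=> w h'.
    have : rp h' ^ g \in R by rewrite memJ_norm //; apply/imsetP; exists h'.
    case/imsetP => h'' _ E.
    have E1 : forall z, g (z * h') = g z * h''.
      move=> z; have := permJ (rp h') g z; rewrite E -[perm _]/(rp h'') !rpE.
      by move=> ->.
    by have := E1 1; rewrite mul1g g1 mul1g => ->; exact: E1.
  have xO : orbit 'P K x \in S by rewrite SE; apply/imsetP; exists x.
  have : g x \in orbit 'P K x.
    have := AutSP _ _ gA _ xO 1 x; rewrite invg1 mulg1 g1 invg1 mulg1.
    by apply; exact: orbit_refl.
  case/orbitP => k Hk Ek; rewrite /= apermE in Ek.
  have Ak := subsetP KA k Hk.
  have gk : g = k.
    apply/permP => y.
    have : y \in <[x]> by rewrite -(eqP genx) inE.
    case/cycleP => n ->.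
    elim: n => [|n IH]; first by rewrite expg0 g1 aut1.
    by rewrite expgS gM autM // IH Ek.
  have -> : f = g * rp h.
    by rewrite /g -mulgA -rpM mulVg rp1 mulg1.
  rewrite -(normC KN) gk; apply: mem_mulg => //.
  by apply/imsetP; exists h.
rewrite ER (sdprodE (K:=RG) KN) //.
  apply/eqP. rewrite -(subG1 (RG :&: K)%G).
apply/subsetP => r /setIP[/imsetP[h _ ->] Hk].
have Ak := subsetP KA _ Hk.
have := aut1 Ak; rewrite -[perm _]/(rp h) rpE mul1g => ->.
by rewrite rp1 inE.
Qed.
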